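(* Let $K\ge0$, $N\in[n,\infty)$ with $n\ge 2$, $R>0$, and set $\alpha:=N\,\mathcal H(2\sqrt{K/N}\,R)$, where $\mathcal H(t)=t\coth t$ (with $\mathcal H(0)=1$); in particular $\alpha\ge2$. Then there exists a function $h:[0,\infty)\to\mathbb R$ such that: (i) $h\in C^2[0,\infty)$ and $h'(0)=0$; (ii) $\inf_{[0,\infty)}h\ge-\alpha^2 18^\alpha$; (iii) for $t>1/18$: $h''(t)-\frac{h'(t)}t=-\alpha(\alpha+2)t^{-(\alpha+2)}<0$ and $\frac{h'(t)}t=\alpha t^{-(\alpha+2)}>0$; for $0<t\le1/18$: $\big|h''(t)-\frac{h'(t)}t\big|\le 972\,\alpha^2 18^\alpha$ and $0<\frac{h'(t)}t\le 972\,\alpha^2 18^\alpha$. *)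

(* Defs.v *)
From Stdlib Require Import Reals.
From Coquelicot Require Import Coquelicot.
Open Scope R_scope.

Definition Hcoth (t : R) : R :=
  if Req_EM_T t 0 then 1 else t * cosh t / sinh t.

Definition deriv_on_nonneg (f : R -> R) (x d : R) : Prop :=
  filterlim (fun y => (f y - f x) / (y - x))
            (within (fun y => 0 <= y /\ y <> x) (locally x)) (locally d).

Definition cont_on_nonneg (f : R -> R) (x : R) : Prop :=
  filterlim f (within (fun y => 0 <= y) (locally x)) (locally (f x)).

Definition C2_nonneg (h h1 h2 : R -> R) : Prop :=
  (forall x, 0 <= x -> deriv_on_nonneg h x (h1 x)) /\
  (forall x, 0 <= x -> deriv_on_nonneg h1 x (h2 x)) /\
  (forall x, 0 <= x -> cont_on_nonneg h2 x).

(* Main.v *)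
Require Import Defs.
From Stdlib Require Import Reals Lra.
From Coquelicot Require Import Coquelicot.
Open Scope R_scope.

Definition t0 : R := 1/18.
Definition pw (f g : R -> R) (y : R) : R := if Rle_dec y t0 then f y else g y.

Lemma dn_intro f x d :
  (forall eps, 0 < eps -> exists del, 0 < del /\ forall y, 0 <= y -> y <> x ->
     Rabs (y - x) < del -> Rabs ((f y - f x)/(y - x) - d) < eps) ->
  deriv_on_nonneg f x d.
Proof.
  intros H. unfold deriv_on_nonneg. apply filterlim_locally. intros eps.
  destruct (H eps (cond_pos eps)) as [del [Hd H']].
  exists (mkposreal del Hd). intros y Hy [Hy0 Hyx]. apply H'; auto.
Qed.

Lemma cn_intro f x :
  (forall eps, 0 < eps -> exists del, 0 < del /\ forall y, 0 <= y ->
     Rabs (y - x) < del -> Rabs (f y - f x) < eps) ->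
  cont_on_nonneg f x.
Proof.
  intros H. unfold cont_on_nonneg. apply filterlim_locally. intros eps.
  destruct (H eps (cond_pos eps)) as [del [Hd H']].
  exists (mkposreal del Hd). intros y Hy Hy0. apply H'; auto.
Qed.

Lemma der_eps f x d : is_derive f x d -> forall eps, 0 < eps -> exists del, 0 < del /\
  forall y, y <> x -> Rabs (y - x) < del -> Rabs ((f y - f x)/(y - x) - d) < eps.
Proof.
  intros H eps He. apply is_derive_Reals in H.
  destruct (H eps He) as [del Hd]. exists del. split. apply cond_pos.
  intros y Hy Hyd. replace y with (x + (y - x)) at 1 by ring. apply Hd.
  lra. exact Hyd.
Qed.

Lemma cont_eps f x : continuous f x -> forall eps, 0 < eps -> exists del, 0 < del /\
  forall y, Rabs (y - x) < del -> Rabs (f y - f x) < eps.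
Proof.
  intros H eps He. apply filterlim_locally with (eps := mkposreal eps He) in H.
  destruct H as [del Hd]. exists del. split. apply cond_pos.
  intros y Hy. apply (Hd y). exact Hy.
Qed.

Lemma deriv_pw (f g f' g' : R -> R) x : 0 <= x ->
  (forall y, is_derive f y (f' y)) -> (forall y, 0 < y -> is_derive g y (g' y)) ->
  f t0 = g t0 -> f' t0 = g' t0 ->
  deriv_on_nonneg (pw f g) x (pw f' g' x).
Proof.
  intros Hx Hf Hg E1 E2. unfold t0 in *. apply dn_intro. intros eps He.
  destruct (Rtotal_order x t0) as [Hl|[He0|Hr]]; unfold t0 in *.
  - destruct (der_eps _ _ _ (Hf x) eps He) as [d [Hd H]].
    exists (Rmin d (1/18 - x)). split. apply Rmin_pos; lra.
    intros y Hy Hyx Hyd. assert (Hm1 := Rmin_l d (1/18 - x)). assert (Hm2 := Rmin_r d (1/18-x)).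
    unfold pw, t0. destruct (Rle_dec y (1/18)); [|apply Rabs_def2 in Hyd; lra].
    destruct (Rle_dec x (1/18)); [|lra]. apply H; auto. lra.
  - subst x. destruct (der_eps _ _ _ (Hf (1/18)) eps He) as [d [Hd H]].
    destruct (der_eps _ _ _ (Hg (1/18) ltac:(lra)) eps He) as [d2 [Hd2 H2]].
    exists (Rmin d d2). split. apply Rmin_pos; lra.
    intros y Hy Hyx Hyd. assert (Hm1 := Rmin_l d d2). assert (Hm2 := Rmin_r d d2).
    unfold pw, t0. destruct (Rle_dec (1/18) (1/18)); [|lra].
    destruct (Rle_dec y (1/18)). apply H; auto. lra.
    rewrite E1, E2. apply H2; auto. lra.
  - destruct (der_eps _ _ _ (Hg x ltac:(lra)) eps He) as [d [Hd H]].
    exists (Rmin d (x - 1/18)). split. apply Rmin_pos; lra.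
    intros y Hy Hyx Hyd. assert (Hm1 := Rmin_l d (x - 1/18)). assert (Hm2 := Rmin_r d (x - 1/18)).
    unfold pw, t0. destruct (Rle_dec y (1/18)); [apply Rabs_def2 in Hyd; lra|].
    destruct (Rle_dec x (1/18)); [lra|]. apply H; auto. lra.
Qed.

Lemma cont_pw (f g : R -> R) x : 0 <= x ->
  (forall y, continuous f y) -> (forall y, 0 < y -> continuous g y) ->
  f t0 = g t0 -> cont_on_nonneg (pw f g) x.
Proof.
  intros Hx Hf Hg E1. unfold t0 in *. apply cn_intro. intros eps He.
  destruct (Rtotal_order x t0) as [Hl|[He0|Hr]]; unfold t0 in *.
  - destruct (cont_eps _ _ (Hf x) eps He) as [d [Hd H]].
    exists (Rmin d (1/18 - x)). split. apply Rmin_pos; lra.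
    intros y Hy Hyd. assert (Hm1 := Rmin_l d (1/18 - x)). assert (Hm2 := Rmin_r d (1/18-x)).
    unfold pw, t0. destruct (Rle_dec y (1/18)); [|apply Rabs_def2 in Hyd; lra].
    destruct (Rle_dec x (1/18)); [|lra]. apply H; auto. lra.
  - subst x. destruct (cont_eps _ _ (Hf (1/18)) eps He) as [d [Hd H]].
    destruct (cont_eps _ _ (Hg (1/18) ltac:(lra)) eps He) as [d2 [Hd2 H2]].
    exists (Rmin d d2). split. apply Rmin_pos; lra.
    intros y Hy Hyd. assert (Hm1 := Rmin_l d d2). assert (Hm2 := Rmin_r d d2).
    unfold pw, t0. destruct (Rle_dec (1/18) (1/18)); [|lra].
    destruct (Rle_dec y (1/18)). apply H; auto. lra.
    rewrite E1. apply H2; auto. lra.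
  - destruct (cont_eps _ _ (Hg x ltac:(lra)) eps He) as [d [Hd H]].
    exists (Rmin d (x - 1/18)). split. apply Rmin_pos; lra.
    intros y Hy Hyd. assert (Hm1 := Rmin_l d (x - 1/18)). assert (Hm2 := Rmin_r d (x - 1/18)).
    unfold pw, t0. destruct (Rle_dec y (1/18)); [apply Rabs_def2 in Hyd; lra|].
    destruct (Rle_dec x (1/18)); [lra|]. apply H; auto. lra.
Qed.

Lemma sinh_le t : 0 < t -> sinh t <= t * cosh t.
Proof.
  intros Ht.
  destruct (MVT_cor2 (fun s => s * cosh s - sinh s) (fun s => s * sinh s) 0 t Ht) as [c [Hc Hct]].
  - intros c _. 
    apply (derivable_pt_lim_ext (fun s => (s * cosh s) - sinh s)). intros; reflexivity.
    replace (c * sinh c) with ((1 * cosh c + c * sinh c) - cosh c) by ring.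
    apply derivable_pt_lim_minus. apply derivable_pt_lim_mult. apply derivable_pt_lim_id.
    apply derivable_pt_lim_cosh. apply derivable_pt_lim_sinh.
  - rewrite sinh_0, cosh_0 in Hc.
    assert (sinh 0 < sinh c) by (apply sinh_lt; lra). rewrite sinh_0 in H.
    assert (0 <= c * sinh c * (t - 0)) by (apply Rmult_le_pos; [apply Rmult_le_pos|]; lra).
    lra.
Qed.

Lemma Hcoth_ge1 t : 0 <= t -> 1 <= Hcoth t.
Proof.
  intros Ht. unfold Hcoth. destruct (Req_EM_T t 0). lra.
  assert (0 < t) by lra. assert (sinh 0 < sinh t) by (apply sinh_lt; lra).
  rewrite sinh_0 in H0. assert (H1 := sinh_le t H).
  unfold Rdiv. apply (Rmult_le_reg_r (sinh t)). lra.
  rewrite Rmult_assoc, Rinv_l; lra.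
Qed.

Lemma Rp_inv18 e : Rpower (1/18) (- e) = Rpower 18 e.
Proof.
  unfold Rpower. f_equal. replace (1/18) with (/18) by field. rewrite ln_Rinv by lra. ring.
Qed.

Lemma Rp18_plus1 a : Rpower 18 (a + 1) = 18 * Rpower 18 a.
Proof. rewrite Rpower_plus, Rpower_1 by lra. ring. Qed.
Lemma Rp18_plus2 a : Rpower 18 (a + 2) = 324 * Rpower 18 a.
Proof. replace (a+2) with ((a+1)+1) by ring. rewrite !Rp18_plus1. ring. Qed.

Lemma Rp_shift t e : 0 < t -> Rpower t e = t * Rpower t (e - 1).
Proof. intros. replace e with (1 + (e - 1)) at 1 by ring. rewrite Rpower_plus, Rpower_1; auto. Qed.

Lemma Rp_pos t e : 0 < Rpower t e.
Proof. unfold Rpower. apply exp_pos. Qed.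

Definition P a := Rpower 18 a.
Definition A a := a * 324 * P a.
Definition B a := - (a * (a + 2) * 5832 * P a).
Definition poly a t := (A a - B a * (1/18)) * t^2/2 + B a * t^3/3.
Definition Cc a := poly a (1/18) + P a.

Lemma poly_nonneg a t : 0 <= a -> 0 <= t <= 1/18 -> 0 <= poly a t.
Proof.
  intros Ha Ht. assert (HP : 0 < P a) by apply Rp_pos.
  assert (HA : 0 <= A a) by (unfold A; apply Rmult_le_pos; lra).
  assert (HB : 0 <= - B a) by (unfold B; rewrite Ropp_involutive;
     apply Rmult_le_pos; [apply Rmult_le_pos; [apply Rmult_le_pos|]|]; lra).
  assert (H1 : 0 <= - B a * (1/18 - t)) by (apply Rmult_le_pos; lra).
  replace (poly a t) with (t^2 * (A a / 2 + (- B a) * (1/18) / 6 + (- B a * (1/18 - t)) / 3))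
    by (unfold poly; field).
  apply Rmult_le_pos. apply pow2_ge_0. lra.
Qed.

Lemma der_tail0 a c y : 0 < y ->
  is_derive (fun t => c - Rpower t (- a)) y (a * Rpower y (-(a+1))).
Proof.
  intros Hy. assert (H := derivable_pt_lim_power y (-a) Hy).
  apply is_derive_Reals in H.
  assert (H2 := is_derive_minus (fun _ => c) (fun t => Rpower t (-a)) y _ _ (is_derive_const c y) H).
  replace (a * Rpower y (-(a+1))) with (minus (@zero R_AbelianGroup) (-a * Rpower y (-a-1))).
  exact H2. unfold minus, plus, opp, zero; simpl. replace (-a-1) with (-(a+1)) by ring. ring.
Qed.

Lemma der_tailk (k e y : R) : 0 < y ->
  is_derive (fun t => k * Rpower t e) y (k * (e * Rpower y (e - 1))).
Proof.
  intros Hy. assert (H := derivable_pt_lim_power y e Hy).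
  apply is_derive_Reals in H. apply is_derive_scal. exact H.
Qed.

Lemma cont_of_der (f : R -> R) y d : is_derive f y d -> continuous f y.
Proof. intros H. apply is_derive_Reals in H.
  apply continuity_pt_filterlim. apply derivable_continuous_pt. exists d. exact H. Qed.

Theorem lemma6p1 (K N Rad : R) (n : nat)
  (hK : 0 <= K) (hn : (2 <= n)%nat) (hN : INR n <= N) (hR : 0 < Rad) :
  let alpha := N * Hcoth (2 * sqrt (K / N) * Rad) in
  exists h h1 h2 : R -> R,
    (* (i) *)
    C2_nonneg h h1 h2 /\ h1 0 = 0 /\
    (* (ii) *)
    (forall t, 0 <= t -> h t >= - (alpha ^ 2 * Rpower 18 alpha)) /\
    (* (iii), t > 1/18 *)
    (forall t, 1 / 18 < t ->
       h2 t - h1 t / t = - alpha * (alpha + 2) * Rpower t (- (alpha + 2)) /\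
       - alpha * (alpha + 2) * Rpower t (- (alpha + 2)) < 0 /\
       h1 t / t = alpha * Rpower t (- (alpha + 2)) /\
       alpha * Rpower t (- (alpha + 2)) > 0) /\
    (* (iii), 0 < t <= 1/18 *)
    (forall t, 0 < t <= 1 / 18 ->
       Rabs (h2 t - h1 t / t) <= 972 * alpha ^ 2 * Rpower 18 alpha /\
       0 < h1 t / t /\ h1 t / t <= 972 * alpha ^ 2 * Rpower 18 alpha).
Proof.
  intros a.
  assert (Ha : 2 <= a).
  { unfold a. assert (H2 : INR 2 <= INR n) by (apply le_INR; exact hn).
    simpl in H2.
    assert (Hc : 1 <= Hcoth (2 * sqrt (K / N) * Rad)).
    { apply Hcoth_ge1. assert (0 <= sqrt (K/N)) by apply sqrt_pos.
      apply Rmult_le_pos; [apply Rmult_le_pos|]; lra. }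
    nra. }
  assert (HP : 0 < P a) by apply Rp_pos.
  exists (pw (poly a) (fun t => Cc a - Rpower t (-a))),
    (pw (fun t => t * (A a + B a * (t - 1/18))) (fun t => a * Rpower t (-(a+1)))),
    (pw (fun t => A a + B a * (2*t - 1/18)) (fun t => -a*(a+1)*Rpower t (-(a+2)))).
  split; [split; [|split]|split; [|split; [|split]]].
  - intros x Hx. apply deriv_pw; auto.
    + intros y. unfold poly. auto_derive; auto. field.
    + intros y Hy. apply der_tail0; auto.
    + unfold t0, Cc. rewrite Rp_inv18. unfold P. ring.
    + unfold t0. rewrite Rp_inv18, Rp18_plus1. unfold A, P. field.
  - intros x Hx. apply deriv_pw; auto.
    + intros y. auto_derive; auto. ring.
    + intros y Hy. replace (-a*(a+1)*Rpower y (-(a+2))) with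
        (a * (-(a+1) * Rpower y (-(a+1) - 1))).
      apply der_tailk; auto. replace (-(a+1)-1) with (-(a+2)) by ring. ring.
    + unfold t0. rewrite Rp_inv18, Rp18_plus1. unfold A, P. field.
    + unfold t0. rewrite Rp_inv18, Rp18_plus2. unfold A, B, P. field.
  - intros x Hx. apply cont_pw; auto.
    + intros y. eapply cont_of_der. auto_derive; auto.
    + intros y Hy. eapply cont_of_der. apply der_tailk; auto.
    + unfold t0. rewrite Rp_inv18, Rp18_plus2. unfold A, B, P. field.
  - unfold pw, t0. destruct (Rle_dec 0 (1/18)); [ring|lra].
  - intros t Ht. assert (0 <= a^2 * Rpower 18 a) by (apply Rmult_le_pos; [apply pow2_ge_0|apply Rlt_le, Rp_pos]).
    enough (0 <= pw (poly a) (fun t => Cc a - Rpower t (-a)) t) by lra.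
    unfold pw, t0. destruct (Rle_dec t (1/18)).
    + apply poly_nonneg; lra.
    + assert (Hq := poly_nonneg a (1/18) ltac:(lra) ltac:(lra)).
      assert (Hle : Rpower t (-a) <= P a).
      { unfold P. rewrite <- Rp_inv18, !Rpower_Ropp.
        apply Rinv_le_contravar. apply Rp_pos. apply Rle_Rpower_l; lra. }
      unfold Cc. lra.
  - intros t Ht. unfold pw, t0. destruct (Rle_dec t (1/18)); [lra|].
    assert (Hs : Rpower t (-(a+1)) = t * Rpower t (-(a+2))).
    { rewrite (Rp_shift t (-(a+1))) by lra. f_equal. f_equal. ring. }
    assert (Hp := Rp_pos t (-(a+2))).
    rewrite Hs. split; [field; lra|]. split. nra. split; [field; lra|]. nra.
  - intros t Ht. unfold pw, t0. destruct (Rle_dec t (1/18)); [|lra].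
    assert (HB : 0 <= - B a) by (unfold B; rewrite Ropp_involutive;
     apply Rmult_le_pos; [apply Rmult_le_pos; [apply Rmult_le_pos|]|]; lra).
    replace (t * (A a + B a * (t - 1 / 18)) / t) with (A a + B a * (t - 1/18)) by (field; lra).
    replace (A a + B a * (2 * t - 1 / 18) - (A a + B a * (t - 1 / 18))) with (B a * t) by ring.
    assert (H1 : 0 <= - B a * t) by (apply Rmult_le_pos; lra).
    assert (H2 : - B a * t <= - B a * (1/18)) by (apply Rmult_le_compat_l; lra).
    assert (H3 : - B a * (1/18) = a * (a+2) * 324 * P a) by (unfold B; field).
    assert (H4 : a * (a+2) * 324 * P a <= 972 * a^2 * P a).
    { assert (0 <= a * 324 * P a) by (apply Rmult_le_pos; lra).
      replace (972 * a^2 * P a) with (a * 324 * P a * (3 * a)) by ring.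
      replace (a * (a+2) * 324 * P a) with (a * 324 * P a * (a + 2)) by ring.
      apply Rmult_le_compat_l; lra. }
    assert (HA : A a = a * 324 * P a) by reflexivity.
    assert (0 < a * 324 * P a) by (apply Rmult_lt_0_compat; lra).
    fold (P a).
    split. rewrite Rabs_left1 by lra. lra.
    split. nra.
    assert (H5 : a * 324 * P a * (a + 3) <= 972 * a^2 * P a).
    { replace (972 * a^2 * P a) with (a * 324 * P a * (3 * a)) by ring.
      apply Rmult_le_compat_l; lra. }
    nra.
Qed.
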